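(* Let $\gamma_1\in\Gamma/\Psi$. The graded module $\mathrm{gr}_{\mathcal F(\gamma_1)}\mathcal P_{\gamma_1}/\mathcal P_{\gamma_1}^+=\bigoplus_{\gamma\in q^{-1}(\gamma_1)}\mathcal P_\gamma/\mathcal P_\gamma^+$ is a finitely generated module over $\mathrm{gr}_{\bar\nu}R/P=\bigoplus_{\delta\in\Psi,\ \delta\ge 0}\mathcal P_\delta/\mathcal P_\delta^+$ if and only if the set $$F_{\gamma_1}=\{\nu(f)\mid f\in R,\ \nu_1(f)=\gamma_1\}$$ is a finitely generated module over the semigroup $\bar F=\bar\nu\big((R/P)\setminus\{0\}\big)$.
   Context: Let $(R,m)$ be a noetherian local domain with residue field $K$, and let $\nu$ be a valuation of the fraction field of $R$ with valuation ring $(R_\nu,m_\nu)$ such that $R\subset R_\nu$, $m_\nu\cap R=m$, and the residual map $R/m\to R_\nu/m_\nu$ is an isomorphism. Let $\Gamma$ be the value group of $\nu$, assumed of finite rank, let $\Psi\subset\Gamma$ be the smallest nonzero convex subgroup (the convex subgroup of rank one), and let $q\colon\Gamma\to\Gamma/\Psi$ be the quotient map. Let $\nu_1=q\circ\nu$ be the valuation (with values in $\Gamma/\Psi$) with which $\nu$ is composed, let $P=\{f\in R\mid \nu_1(f)>0\}$ be its center on $R$, and let $\bar\nu$ be the residual valuation on $R/P$, given by $\bar\nu(f \bmod P)=\nu(f)\in\Psi$ for $f\in R\setminus P$. For $\gamma\in\Gamma$ put $\mathcal P_\gamma=\{f\in R\mid\nu(f)\ge\gamma\}$, $\mathcal P_\gamma^+=\{f\in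 R\mid \nu(f)>\gamma\}$; for $\gamma_1\in\Gamma/\Psi$ put $\mathcal P_{\gamma_1}=\{f\in R\mid \nu_1(f)\ge\gamma_1\}$, $\mathcal P_{\gamma_1}^+=\{f\in R\mid\nu_1(f)>\gamma_1\}$. The ring $\mathrm{gr}_{\bar\nu}R/P=\bigoplus_{\delta\in\Psi,\delta\ge0}\mathcal P_\delta/\mathcal P_\delta^+$ is the graded ring of $R/P$ for $\bar\nu$, and $\bigoplus_{\gamma\in q^{-1}(\gamma_1)}\mathcal P_\gamma/\mathcal P_\gamma^+$ (the graded module associated to the filtration of $\mathcal P_{\gamma_1}/\mathcal P^+_{\gamma_1}$ by the images of the $\mathcal P_\gamma$, $\gamma\in q^{-1}(\gamma_1)$) is a graded module over it via the multiplication maps $\mathcal P_\delta/\mathcal P_\delta^+\times\mathcal P_\gamma/\mathcal P_\gamma^+\to\mathcal P_{\delta+\gamma}/\mathcal P_{\delta+\gamma}^+$. If $S$ is a commutative semigroup, a subset $F$ of $\Gamma$ with $S+F\subseteq F$ is an $S$-module; it is finitely generated if there are $m_1,\dots,m_k\in F$ with $F=\bigcup_{i=1}^k(S+m_i)$. *)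

(* Defs.v *)
From HB Require Import structures.
From mathcomp Require Import all_boot all_order all_algebra.
From mathcomp Require Import fraction.
Set Implicit Arguments. Unset Strict Implicit. Unset Printing Implicit Defensive.
Import Order.TTheory GRing.Theory Num.Theory.
Local Open Scope ring_scope.

Definition is_ideal (R : comNzRingType) (I : R -> Prop) : Prop :=
  [/\ I 0, (forall x y, I x -> I y -> I (x + y)) & (forall a x, I x -> I (a * x))].

Definition fg_ideal (R : comNzRingType) (I : R -> Prop) : Prop :=
  exists s : seq R, forall x, I x <->
    exists c : seq R, size c = size s /\ x = \sum_(i < size s) c`_i * s`_i.

Definition noetherian (R : comNzRingType) : Prop :=
  forall I : R -> Prop, is_ideal I -> fg_ideal I.

(* local ring: the non-units form an ideal (the unique maximal ideal m) *)
Definition local_ring (R : comUnitRingType) : Prop :=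
  forall x y : R, x \isn't a GRing.unit -> y \isn't a GRing.unit ->
    (x + y) \isn't a GRing.unit.

Definition ordered_group (G : porderZmodType) : Prop :=
  (forall x y : G, (x <= y) || (y <= x)) /\
  (forall x y z : G, x <= y -> x + z <= y + z).

Definition is_subgroup (G : porderZmodType) (H : G -> Prop) : Prop :=
  H 0 /\ (forall x y, H x -> H y -> H (x - y)).

Definition convex_subgroup (G : porderZmodType) (H : G -> Prop) : Prop :=
  is_subgroup H /\ (forall x y, H y -> 0 <= x -> x <= y -> H x).

Definition finite_rank (G : porderZmodType) : Prop :=
  exists (n : nat) (Hs : nat -> G -> Prop), forall H : G -> Prop,
    convex_subgroup H -> exists i, (i < n)%N /\ forall x, H x <-> Hs i x.

Definition smallest_nonzero_convex (G : porderZmodType) (Psi : G -> Prop) : Prop :=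
  [/\ convex_subgroup Psi, (exists x, Psi x /\ x <> 0) &
      (forall H : G -> Prop, convex_subgroup H -> (exists x, H x /\ x <> 0) ->
         forall x, Psi x -> H x)].

Section Val.
Variables (G : porderZmodType) (R : idomainType).
Variable nu : {fraction R} -> G.  (* value at 0 is irrelevant: nu(0) = +oo *)

Definition valuation : Prop :=
  (forall x y, x != 0 -> y != 0 -> nu (x * y) = nu x + nu y) /\
  (forall x y, x != 0 -> y != 0 -> x + y != 0 ->
     nu x <= nu (x + y) \/ nu y <= nu (x + y)).

Definition value_group : Prop := forall g : G, exists x, x != 0 /\ nu x = g.

Definition in_Rnu (x : {fraction R}) : Prop := x = 0 \/ 0 <= nu x.
Definition in_mnu (x : {fraction R}) : Prop := x = 0 \/ 0 < nu x.

(* R ⊂ R_nu, m_nu ∩ R = m (= non-units), and R/m -> R_nu/m_nu onto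
   (it is automatically injective by the second condition) *)
Definition centered_residually_rational : Prop :=
  [/\ (forall r : R, in_Rnu ((FracField.tofrac r))),
      (forall r : R, in_mnu ((FracField.tofrac r)) <-> r \isn't a GRing.unit) &
      (forall x, in_Rnu x -> exists r : R, in_mnu (x - (FracField.tofrac r)))].

Definition vR (f : R) : G := nu (FracField.tofrac f).

Definition Pge (g : G) (f : R) : Prop := f = 0 \/ g <= vR f.
Definition Pgt (g : G) (f : R) : Prop := f = 0 \/ g < vR f.

Variable Psi : G -> Prop.

(* order on G/Psi: q a < q b iff a < b and b - a \notin Psi (Psi convex) *)
(* center P of nu_1 = q o nu:  nu_1(f) > 0 *)
Definition inP (f : R) : Prop := f = 0 \/ (0 < vR f /\ ~ Psi (vR f)).

(* gamma_1 = q g1 ; nu_1(f) = gamma_1 *)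
Definition nu1_eq (g1 : G) (f : R) : Prop := f <> 0 /\ Psi (vR f - g1).

(* ---- graded objects: an element of a direct sum  (+)_gamma P_gamma/P_gamma^+
   is represented by a finite list of homogeneous pieces (degree, representative);
   its gamma-component is the class of the sum of the representatives of degree gamma. *)
Definition component (m : seq (G * R)) (g : G) : R :=
  \sum_(p <- m | p.1 == g) p.2.

(* element of gr_{nubar} R/P = (+)_{delta in Psi, delta >= 0} P_delta/P_delta^+ *)
Definition gr_ring_elt (a : seq (G * R)) : Prop :=
  forall p, p \in a -> [/\ Psi p.1, 0 <= p.1 & Pge p.1 p.2].

(* element of (+)_{gamma in q^-1(gamma_1)} P_gamma/P_gamma^+ *)
Definition gr_mod_elt (g1 : G) (m : seq (G * R)) : Prop :=
  forall p, p \in m -> Psi (p.1 - g1) /\ Pge p.1 p.2.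

Definition gr_eq (m m' : seq (G * R)) : Prop :=
  forall g, Pgt g (component m g - component m' g).

(* module action (multiplication maps P_d/P_d^+ x P_g/P_g^+ -> P_{d+g}/P_{d+g}^+) *)
Definition gr_scale (a m : seq (G * R)) : seq (G * R) :=
  [seq (p.1 + q.1, p.2 * q.2) | p <- a, q <- m].

Definition gr_lincomb (rs ms : seq (seq (G * R))) : seq (G * R) :=
  flatten [seq gr_scale pr.1 pr.2 | pr <- zip rs ms].

Definition gr_module_fg (g1 : G) : Prop :=
  exists ms : seq (seq (G * R)),
    (forall m, m \in ms -> gr_mod_elt g1 m) /\
    forall m, gr_mod_elt g1 m ->
      exists rs : seq (seq (G * R)),
        [/\ size rs = size ms, (forall a, a \in rs -> gr_ring_elt a) &
            gr_eq m (gr_lincomb rs ms)].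

(* semigroup Fbar = nubar((R/P) \ {0}) and F_{gamma_1} *)
Definition Fbar (x : G) : Prop := exists f : R, ~ inP f /\ vR f = x.
Definition Fset (g1 : G) (x : G) : Prop := exists f : R, nu1_eq g1 f /\ vR f = x.

End Val.

Definition sg_module (G : porderZmodType) (S F : G -> Prop) : Prop :=
  forall s x, S s -> F x -> F (s + x).

Definition sg_module_fg (G : porderZmodType) (S F : G -> Prop) : Prop :=
  sg_module S F /\
  exists ms : seq G, (forall m, m \in ms -> F m) /\
    forall x, F x <-> exists m, m \in ms /\ exists s, S s /\ x = s + m.

(* Main.v *)
Require Import Defs.
From HB Require Import structures.
From mathcomp Require Import all_boot all_order all_algebra.
From mathcomp Require Import fraction.
From Stdlib Require Import Classical.
Import Order.TTheory GRing.Theory Num.Theory.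

Local Open Scope ring_scope.
Set Implicit Arguments. Unset Strict Implicit.

Lemma og_le_add (G : porderZmodType) (oG : ordered_group G) (x y z : G) :
  x <= y -> x + z <= y + z.
Proof. by case: oG => _ H; apply: H. Qed.

Lemma og_lt_add (G : porderZmodType) (oG : ordered_group G) (x y z : G) :
  x < y -> x + z < y + z.
Proof.
rewrite !lt_def => /andP[ne le]; rewrite og_le_add // andbT.
by apply: contra ne => /eqP/addIr ->.
Qed.

Lemma og_nlt (G : porderZmodType) (oG : ordered_group G) (x y : G) :
  ~ (x < y) -> y <= x.
Proof.
move=> H; case: oG => tot _; case/orP: (tot x y) => // le.
rewrite le_eqVlt in le; case/orP: le => [/eqP->//|/H//].
Qed.

Lemma og_le_lt (G : porderZmodType) (oG : ordered_group G) (x y : G) :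
  x <= y -> x <> y -> x < y.
Proof. by move=> le ne; rewrite lt_def le andbT; apply/eqP=> e; apply: ne. Qed.

Lemma tofrac_neq0 (R : idomainType) (f : R) : f != 0 -> (FracField.tofrac f) != 0.
Proof. by rewrite tofrac_eq0. Qed.

Lemma vR_ge0 (G : porderZmodType) (R : idomainType) (nu : {fraction R} -> G) :
  centered_residually_rational nu -> forall f : R, f != 0 -> 0 <= vR nu f.
Proof.
case=> H _ _ f nz; case: (H f) => //.
by move=> /eqP; rewrite tofrac_eq0 (negbTE nz).
Qed.

Lemma vR_mul (G : porderZmodType) (R : idomainType) (nu : {fraction R} -> G) :
  valuation nu -> forall f g : R, f != 0 -> g != 0 -> vR nu (f * g) = vR nu f + vR nu g.
Proof.
case=> H _ f g nf ng; rewrite /vR tofracM H //; exact: tofrac_neq0.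
Qed.

Lemma val_add (G : porderZmodType) (R : idomainType) (nu : {fraction R} -> G) :
  valuation nu -> forall f g : R, f != 0 -> g != 0 -> f + g != 0 ->
  vR nu f <= vR nu (f + g) \/ vR nu g <= vR nu (f + g).
Proof.
case=> _ H f g nf ng nfg; rewrite /vR tofracD; apply: H; rewrite -?tofracD;
  exact: tofrac_neq0.
Qed.

Lemma Pgt_add (G : porderZmodType) (R : idomainType) (nu : {fraction R} -> G) :
  valuation nu -> forall (x : G) (f g : R), Pgt nu x f -> Pgt nu x g -> Pgt nu x (f + g).
Proof.
move=> vnu x f g Hf Hg.
have [->|nf] := eqVneq f 0; first by rewrite add0r.
have [->|ng] := eqVneq g 0; first by rewrite addr0.
have [->|nfg] := eqVneq (f + g) 0; first by left.
case: Hf => [e|Hf]; first by move: nf; rewrite e eqxx.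
case: Hg => [e|Hg]; first by move: ng; rewrite e eqxx.
right; case: (val_add vnu nf ng nfg) => le; exact: lt_le_trans le.
Qed.

Lemma Pge_add (G : porderZmodType) (R : idomainType) (nu : {fraction R} -> G) :
  valuation nu -> forall (x : G) (f g : R), Pge nu x f -> Pge nu x g -> Pge nu x (f + g).
Proof.
move=> vnu x f g Hf Hg.
have [->|nf] := eqVneq f 0; first by rewrite add0r.
have [->|ng] := eqVneq g 0; first by rewrite addr0.
have [->|nfg] := eqVneq (f + g) 0; first by left.
case: Hf => [e|Hf]; first by move: nf; rewrite e eqxx.
case: Hg => [e|Hg]; first by move: ng; rewrite e eqxx.
right; case: (val_add vnu nf ng nfg) => le; exact: le_trans le.
Qed.

Lemma sum_Pgt (G : porderZmodType) (R : idomainType) (nu : {fraction R} -> G)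
  (T : eqType) (s : seq T) (F : T -> R) (x : G) :
  valuation nu -> (forall i, i \in s -> Pgt nu x (F i)) -> Pgt nu x (\sum_(i <- s) F i).
Proof.
move=> vnu; elim: s => [|a s IH] H; first by rewrite big_nil; left.
rewrite big_cons; apply: Pgt_add => //; first by apply: H; rewrite inE eqxx.
by apply: IH => i iin; apply: H; rewrite inE iin orbT.
Qed.

Lemma sum_nPgt (G : porderZmodType) (R : idomainType) (nu : {fraction R} -> G)
  (T : eqType) (s : seq T) (F : T -> R) (x : G) :
  valuation nu -> ~ Pgt nu x (\sum_(i <- s) F i) -> exists i, i \in s /\ ~ Pgt nu x (F i).
Proof.
move=> vnu H; apply: NNPP => H2; apply: H; apply: sum_Pgt => // i iin.
by apply: NNPP => H3; apply: H2; exists i.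
Qed.

Lemma comp_Pge (G : porderZmodType) (R : idomainType) (nu : {fraction R} -> G)
  (m : seq (G * R)) (g : G) :
  valuation nu -> (forall q, q \in m -> Pge nu q.1 q.2) -> Pge nu g (component m g).
Proof.
move=> vnu; elim: m => [|q m IH] H; first by rewrite /component big_nil; left.
rewrite /component big_cons; case: eqP => [e|_].
  apply: Pge_add => //; last by apply: IH => p pin; apply: H; rewrite inE pin orbT.
  by rewrite -e; apply: H; rewrite inE eqxx.
by apply: IH => p pin; apply: H; rewrite inE pin orbT.
Qed.

Lemma comp_nz (G : porderZmodType) (R : idomainType) (m : seq (G * R)) (g : G) :
  component m g != 0 -> exists q, q \in m /\ q.1 = g.
Proof.
elim: m => [|q m IH]; first by rewrite /component big_nil eqxx.
rewrite /component big_cons; case: (q.1 =P g) => [e|_] H; first by exists q; rewrite inE eqxx.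
by case: (IH H) => p [pin e]; exists p; rewrite inE pin orbT.
Qed.

Lemma comp_cat (G : porderZmodType) (R : idomainType) (s1 s2 : seq (G * R)) g :
  component (s1 ++ s2) g = component s1 g + component s2 g.
Proof. by rewrite /component big_cat. Qed.

Lemma comp_map (G : porderZmodType) (R : idomainType) (p : G * R) (m : seq (G * R)) g :
  component [seq (p.1 + q.1, p.2 * q.2) | q <- m] g = p.2 * component m (g - p.1).
Proof.
elim: m => [|q m IH]; first by rewrite /component !big_nil mulr0.
rewrite /= /component !big_cons -/(component _ _) IH /=.
have -> : (p.1 + q.1 == g) = (q.1 == g - p.1).
  by apply/eqP/eqP => [<-|->]; rewrite ?(addrC p.1) ?addrK // subrK.
by case: (q.1 == g - p.1); rewrite ?addr0 ?add0r // mulrDr.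
Qed.

Lemma comp_scale (G : porderZmodType) (R : idomainType) (a m : seq (G * R)) g :
  component (gr_scale a m) g = \sum_(p <- a) p.2 * component m (g - p.1).
Proof.
elim: a => [|p a IH]; first by rewrite big_nil /component big_nil.
by rewrite /gr_scale allpairs_cons comp_cat comp_map -/(gr_scale a m) IH big_cons.
Qed.

Lemma comp_lincomb (G : porderZmodType) (R : idomainType) (rs ms : seq (seq (G * R))) g :
  component (gr_lincomb rs ms) g =
  \sum_(pr <- zip rs ms) \sum_(p <- pr.1) p.2 * component pr.2 (g - p.1).
Proof.
rewrite /gr_lincomb; elim: (zip rs ms) => [|pr l IH]; first by rewrite big_nil /component big_nil.
by rewrite /= comp_cat IH big_cons comp_scale.
Qed.

Lemma mem_zip' (T1 T2 : eqType) (s : seq T1) (t : seq T2) a b :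
  (a, b) \in zip s t -> a \in s /\ b \in t.
Proof.
elim: s t => [|x s IH] [|y t] //= ; rewrite inE => /orP[/eqP[-> ->]|/IH[h1 h2]].
  by rewrite !inE !eqxx.
by rewrite !inE h1 h2 !orbT.
Qed.

Lemma lincomb_cons (G : porderZmodType) (R : idomainType) (r m : seq (G * R)) rs ms :
  gr_lincomb (r :: rs) (m :: ms) = gr_scale r m ++ gr_lincomb rs ms.
Proof. by []. Qed.

Lemma lincomb_nil (G : porderZmodType) (R : idomainType) (ms : seq (seq (G * R))) n :
  gr_lincomb (nseq n [::]) ms = [::].
Proof. by elim: n ms => [|n IH] [|m ms] //; rewrite lincomb_cons IH. Qed.

Lemma lincomb_single (G : porderZmodType) (R : idomainType) (ms : seq (seq (G * R))) a i :
  (i < size ms)%N -> exists rs, [/\ size rs = size ms,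
    (forall b, b \in rs -> b = [::] \/ b = a) &
    gr_lincomb rs ms = gr_scale a (nth [::] ms i)].
Proof.
elim: ms i => [|m ms IH] [|i] //= lt.
  exists (a :: nseq (size ms) [::]); split.
  - by rewrite /= size_nseq.
  - move=> b; rewrite inE => /orP[/eqP->|/nseqP[-> _]]; by [right|left].
  - by rewrite lincomb_cons lincomb_nil cats0.
have [rs [s1 s2 s3]] := IH i lt.
exists ([::] :: rs); split; first by rewrite /= s1.
- by move=> b; rewrite inE => /orP[/eqP->|/s2]; [left|].
- by rewrite lincomb_cons s3.
Qed.

Lemma lincomb_cat (G : porderZmodType) (R : idomainType) (ms rs1 rs2 : seq (seq (G * R))) g :
  size rs1 = size ms -> size rs2 = size ms ->
  component (gr_lincomb [seq pr.1 ++ pr.2 | pr <- zip rs1 rs2] ms) g =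
  component (gr_lincomb rs1 ms) g + component (gr_lincomb rs2 ms) g.
Proof.
elim: ms rs1 rs2 => [|m ms IH] [|r1 rs1] [|r2 rs2] //=.
  by move=> _ _; rewrite /gr_lincomb /= /component big_nil addr0.
case=> e1 [] e2; rewrite !lincomb_cons !comp_cat IH // /gr_scale allpairs_cat comp_cat.
by rewrite addrACA.
Qed.

Lemma filter_ex (T : eqType) (s : seq T) (P : T -> Prop) :
  exists s' : seq T, (forall x, x \in s' -> P x) /\ (forall x, x \in s -> P x -> x \in s').
Proof.
elim: s => [|a s [s' [H1 H2]]]; first by exists [::].
case: (classic (P a)) => Pa.
  exists (a :: s'); split.
    by move=> x; rewrite inE => /orP[/eqP->|/H1].
  by move=> x; rewrite !inE => /orP[->//|xs Px]; rewrite H2 ?orbT.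
exists s'; split => // x; rewrite inE => /orP[/eqP->//|xs]; exact: H2.
Qed.

Lemma choose_list (T U : eqType) (s : seq T) (Q : T -> U -> Prop) :
  (forall x, x \in s -> exists f, Q x f) ->
  exists fs : seq U, (forall x, x \in s -> exists f, f \in fs /\ Q x f) /\
             (forall f, f \in fs -> exists x, x \in s /\ Q x f).
Proof.
elim: s => [|a s IH] H; first by exists [::].
have [fs [H1 H2]] : exists fs : seq U, (forall x, x \in s -> exists f, f \in fs /\ Q x f) /\
             (forall f, f \in fs -> exists x, x \in s /\ Q x f).
  by apply: IH => x xs; apply: H; rewrite inE xs orbT.
have [f Qf] := H a (mem_head _ _).
exists (f :: fs); split.
  move=> x; rewrite inE => /orP[/eqP->|/H1[g [gin Qg]]]; first by exists f; rewrite inE eqxx.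
  by exists g; rewrite inE gin orbT.
move=> g; rewrite inE => /orP[/eqP->|/H2[x [xs Qx]]]; first by exists a; rewrite inE eqxx.
by exists x; rewrite inE xs orbT.
Qed.

Lemma Psi0 (G : porderZmodType) (Psi : G -> Prop) : smallest_nonzero_convex Psi -> Psi 0.
Proof. by case=> [[[]]]. Qed.

Lemma PsiB (G : porderZmodType) (Psi : G -> Prop) : smallest_nonzero_convex Psi ->
  forall x y, Psi x -> Psi y -> Psi (x - y).
Proof. by case=> [[[_ H]]] _ _ _; apply: H. Qed.

Lemma PsiD (G : porderZmodType) (Psi : G -> Prop) : smallest_nonzero_convex Psi ->
  forall x y, Psi x -> Psi y -> Psi (x + y).
Proof.
move=> H x y px py; rewrite -[y]opprK -[- y]add0r.
by apply: PsiB => //; apply: PsiB => //; apply: Psi0.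
Qed.

Lemma Fbar_elim (G : porderZmodType) (R : idomainType) (nu : {fraction R} -> G) Psi s :
  ordered_group G -> centered_residually_rational nu -> smallest_nonzero_convex Psi ->
  Fbar nu Psi s -> exists h, [/\ h != 0, Psi (vR nu h), 0 <= vR nu h & vR nu h = s].
Proof.
move=> oG cnu sPsi [h [nP <-]].
have nh : h != 0 by apply/eqP=> e; apply: nP; left.
have le := vR_ge0 cnu nh.
exists h; split => //.
have [e|ne] := eqVneq 0 (vR nu h); first by rewrite -e; apply: Psi0.
apply: NNPP => nps; apply: nP; right; split => //; apply: og_le_lt => //; exact/eqP.
Qed.

Lemma Fbar_intro (G : porderZmodType) (R : idomainType) (nu : {fraction R} -> G) Psi (h : R) :
  h != 0 -> Psi (vR nu h) -> Fbar nu Psi (vR nu h).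
Proof.
move=> nh ph; exists h; split => //; case=> [e|[_ n]]; last by apply: n.
by move: nh; rewrite e eqxx.
Qed.

Lemma sgmod (G : porderZmodType) (R : idomainType) (nu : {fraction R} -> G) Psi g1 :
  ordered_group G -> valuation nu -> centered_residually_rational nu ->
  smallest_nonzero_convex Psi -> sg_module (Fbar nu Psi) (Fset nu Psi g1).
Proof.
move=> oG vnu cnu sPsi s x Fs [f [[nf pf] <-]].
have [h [nh ph _ <-]] := Fbar_elim oG cnu sPsi Fs.
have nf' : f != 0 by apply/eqP.
have nhf : h * f != 0 by rewrite mulf_neq0.
exists (h * f); split; last by rewrite vR_mul.
split; first exact/eqP.
by rewrite vR_mul // -addrA; apply: PsiD.
Qed.

Lemma comp1 (G : porderZmodType) (R : idomainType) (a : G) (b : R) g :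
  component [:: (a, b)] g = if a == g then b else 0.
Proof. by rewrite /component big_cons big_nil /=; case: (a == g); rewrite ?addr0. Qed.

Lemma dir1 (G : porderZmodType) (R : idomainType) (nu : {fraction R} -> G) Psi g1 :
  ordered_group G -> valuation nu -> centered_residually_rational nu ->
  smallest_nonzero_convex Psi ->
  gr_module_fg nu Psi g1 -> sg_module_fg (Fbar nu Psi) (Fset nu Psi g1).
Proof.
move=> oG vnu cnu sPsi [ms [Hms Hgen]].
pose s0 := flatten [seq [seq (q.1, component m q.1) | q <- m] | m <- ms].
have [s' [Hs1 Hs2]] := filter_ex s0
  (fun y : G * R => [/\ y.2 != 0, vR nu y.2 = y.1 & Psi (y.1 - g1)]).
split; first exact: sgmod.
exists (map fst s'); split.
  move=> m /mapP[y /Hs1[ny vy py] ->]; exists y.2; split => //.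
  by split; [exact/eqP | rewrite vy].
move=> x; split; last first.
  move=> [m [min [s [Fs ->]]]]; apply: sgmod => //.
  by move: min => /mapP[y /Hs1[ny vy py] ->]; exists y.2; split => //; split; [exact/eqP|rewrite vy].
move=> [f [[nf pf] vf]].
have Hm : gr_mod_elt nu Psi g1 [:: (x, f)].
  move=> p; rewrite inE => /eqP -> /=; split; first by rewrite -vf.
  by right; rewrite vf.
have [rs [szr Hrs Heq]] := Hgen _ Hm.
have Hx := Heq x; rewrite comp1 eqxx in Hx.
have nc : ~ Pgt nu x (component (gr_lincomb rs ms) x).
  move=> Hc; have := Pgt_add vnu Hx Hc; rewrite subrK; case=> [//|].
  by rewrite vf ltxx.
rewrite comp_lincomb in nc.
have [[a m] [prin npr]] := sum_nPgt vnu nc.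
have [p [pin np]] := sum_nPgt vnu npr.
have [ain min] := mem_zip' prin.
have [pp1 p1ge pge] := Hrs a ain p pin.
set c := component m (x - p.1) in np.
have nz : p.2 * c != 0 by apply/eqP => e; apply: np; left.
have n2 : p.2 != 0 by move: nz; rewrite mulf_eq0 negb_or => /andP[].
have nc' : c != 0 by move: nz; rewrite mulf_eq0 negb_or => /andP[].
have Hmm := Hms m min.
have cge : Pge nu (x - p.1) c by apply: comp_Pge => // q /Hmm[].
have le2 : p.1 <= vR nu p.2 by case: pge => // e; move: n2; rewrite e eqxx.
have lec : x - p.1 <= vR nu c by case: cge => // e; move: nc'; rewrite e eqxx.
have leS : vR nu p.2 + vR nu c <= x.
  by rewrite -vR_mul //; apply: og_nlt => // h; apply: np; right.
have ex : x = p.1 + (x - p.1) by rewrite addrC subrK.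
have e2 : vR nu p.2 = p.1.
  apply: NNPP => ne; have lt : p.1 < vR nu p.2 by apply: og_le_lt => // e; apply: ne.
  have := og_lt_add oG (x - p.1) lt; rewrite -ex => lt2.
  have := og_le_add oG (vR nu p.2) lec; rewrite addrC [vR nu c + _]addrC => le3.
  by have := lt_le_trans lt2 (le_trans le3 leS); rewrite ltxx.
have ec : vR nu c = x - p.1.
  apply: NNPP => ne; have lt : x - p.1 < vR nu c by apply: og_le_lt => // e; apply: ne.
  have := og_lt_add oG p.1 lt; rewrite addrC -ex => lt2.
  move: leS; rewrite e2 addrC => leS.
  by have := lt_le_trans lt2 leS; rewrite ltxx.
have [q [qin q1]] := comp_nz nc'.
have ins : (q.1, component m q.1) \in s0.
  by apply/flatten_mapP; exists m => //; apply/mapP; exists q.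
have Pq : [/\ (q.1, component m q.1).2 != 0, vR nu (q.1, component m q.1).2 =
   (q.1, component m q.1).1 & Psi ((q.1, component m q.1).1 - g1)].
  have [pq _] := Hmm q qin; rewrite /= q1; rewrite q1 in pq.
  by split.
have := Hs2 _ ins Pq => ins'.
exists (x - p.1); split; first by rewrite -q1; apply/mapP; exists (q.1, component m q.1).
exists p.1; split => //.
by rewrite -e2; apply: Fbar_intro => //; rewrite e2.
Qed.

Lemma piece (G : porderZmodType) (R : idomainType) (nu : {fraction R} -> G) Psi g1
  (gens : seq G) (fs : seq R) :
  ordered_group G -> valuation nu -> centered_residually_rational nu ->
  smallest_nonzero_convex Psi ->
  (forall x, Fset nu Psi g1 x <-> exists m, m \in gens /\ exists s, Fbar nu Psi s /\ x = s + m) ->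
  (forall x, x \in gens -> exists f, f \in fs /\ (nu1_eq nu Psi g1 f /\ vR nu f = x)) ->
  forall p : G * R, Psi (p.1 - g1) -> Pge nu p.1 p.2 ->
  exists rs, [/\ size rs = size [seq [:: (vR nu f, f)] | f <- fs],
    (forall b, b \in rs -> gr_ring_elt nu Psi b) &
    forall g, Pgt nu g (component [:: p] g -
       component (gr_lincomb rs [seq [:: (vR nu f, f)] | f <- fs]) g)].
Proof.
move=> oG vnu cnu sPsi Hchar Hfs [ga y] /= pp py.
set ms := [seq [:: (vR nu f, f)] | f <- fs].
case: (classic (Pgt nu ga y)) => Hy.
  exists (nseq (size ms) [::]); split; first by rewrite size_nseq.
    by move=> b /nseqP[-> _] q.
  move=> g; rewrite lincomb_nil /component big_nil subr0 -/(component _ _) comp1.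
  by case: eqP => [<-//|_]; left.
have ny : y != 0 by apply/eqP => e; apply: Hy; left.
have vy : vR nu y = ga.
  case: py => [e|le]; first by move: ny; rewrite e eqxx.
  by apply: NNPP => ne; apply: Hy; right; apply: og_le_lt => // e; apply: ne.
have Fg : Fset nu Psi g1 ga by exists y; split => //; split; [exact/eqP|rewrite vy].
have [d [din [s [Fs eg]]]] := (Hchar ga).1 Fg.
have [f [fin [[nf pf] vf]]] := Hfs d din.
have [h [nh ph h0 vh]] := Fbar_elim oG cnu sPsi Fs.
have nf' : f != 0 by apply/eqP.
have nhf : h * f != 0 by rewrite mulf_neq0.
have vhf : vR nu (h * f) = ga by rewrite vR_mul // vh vf.
pose z := FracField.tofrac y / FracField.tofrac (h * f).
have tnhf : FracField.tofrac (h * f) != 0 by rewrite tofrac_eq0.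
have zt : z * FracField.tofrac (h * f) = FracField.tofrac y by rewrite divfK.
have nz : z != 0 by rewrite mulf_neq0 ?invr_neq0 // tofrac_eq0.
have vz : nu z = 0.
  have := vnu.1 _ _ nz tnhf; rewrite zt -/(vR nu y) -/(vR nu (h * f)) vy vhf.
  by move=> e; apply: (@addIr _ ga); rewrite add0r -e.
have [_ _ Hres] := cnu.
have [r Hr] : exists r, in_mnu nu (z - FracField.tofrac r).
  by apply: Hres; right; rewrite vz.
have key : FracField.tofrac (y - r * h * f) =
    (z - FracField.tofrac r) * FracField.tofrac (h * f).
  by rewrite mulrBl zt tofracB !tofracM mulrA.
have Pk : Pgt nu ga (y - r * h * f).
  have [->|nk] := eqVneq (y - r * h * f) 0; first by left.
  case: Hr => [e|lt]; first by move: nk; rewrite -tofrac_eq0 key e mul0r eqxx.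
  right; rewrite /vR key vnu.1 //; last first.
    by apply/eqP => e; move: nk; rewrite -tofrac_eq0 key e mul0r eqxx.
  rewrite -/(vR nu (h * f)) vhf.
  by have := og_lt_add oG ga lt; rewrite add0r.
have ilt : (index f fs < size ms)%N by rewrite size_map index_mem.
have [rs [s1 s2 s3]] := lincomb_single [:: (vR nu h, r * h)] ilt.
exists rs; split => //.
  move=> b /s2 [-> q //|->] q; rewrite inE => /eqP -> /=; split => //.
  have [->|nr] := eqVneq r 0; first by rewrite mul0r; left.
  right; rewrite vR_mul //.
  by have := og_le_add oG (vR nu h) (vR_ge0 cnu nr); rewrite add0r.
move=> g; rewrite s3 /ms (nth_map 0) ?index_mem // nth_index //= comp1 comp1.
rewrite vh vf -eg.
case: eqP => [<-|_]; last by rewrite subr0; left.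
by [].
Qed.

Lemma dir2 (G : porderZmodType) (R : idomainType) (nu : {fraction R} -> G) Psi g1 :
  ordered_group G -> valuation nu -> centered_residually_rational nu ->
  smallest_nonzero_convex Psi ->
  sg_module_fg (Fbar nu Psi) (Fset nu Psi g1) -> gr_module_fg nu Psi g1.
Proof.
move=> oG vnu cnu sPsi [_ [gens [Hg Hchar]]].
have [fs [Hfs1 Hfs2]] := @choose_list _ R gens (fun d f => nu1_eq nu Psi g1 f /\ vR nu f = d) Hg.
exists [seq [:: (vR nu f, f)] | f <- fs]; split.
  move=> m /mapP[f fin ->] p; rewrite inE => /eqP -> /=.
  have [x [_ [[_ pf] _]]] := Hfs2 f fin; split => //; right; exact: lexx.
set ms := [seq [:: (vR nu f, f)] | f <- fs].
elim=> [|p m IH] Hm.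
  exists (nseq (size ms) [::]); split; first by rewrite size_nseq.
    by move=> b /nseqP[-> _] q.
  by move=> g; rewrite lincomb_nil /component !big_nil subr0; left.
have [rs2 [s2 e2 q2]] : exists rs, [/\ size rs = size ms,
    forall a, a \in rs -> gr_ring_elt nu Psi a & gr_eq nu m (gr_lincomb rs ms)].
  by apply: IH => q qin; apply: Hm; rewrite inE qin orbT.
have [pp1 pp2] := Hm p (mem_head _ _).
have [rs1 [s1 e1 q1]] := piece oG vnu cnu sPsi Hchar Hfs1 pp1 pp2.
exists [seq pr.1 ++ pr.2 | pr <- zip rs1 rs2]; split.
- by rewrite size_map size_zip s1 s2 minnn.
- move=> b /mapP[[b1 b2] bin ->] q /=.
  have [b1in b2in] := mem_zip' bin.
  rewrite mem_cat => /orP[qin|qin]; [exact: e1 b1in q qin | exact: e2 b2in q qin].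
- move=> g; rewrite lincomb_cat // -cat1s comp_cat opprD addrACA.
  apply: (Pgt_add vnu); [exact: q1 | exact: q2].
Qed.

Theorem mainTheorem1 (G : porderZmodType) (R : idomainType)
  (nu : {fraction R} -> G) (Psi : G -> Prop) (g1 : G) :
  noetherian R -> local_ring R ->
  ordered_group G -> finite_rank G ->
  valuation nu -> value_group nu -> centered_residually_rational nu ->
  smallest_nonzero_convex Psi ->
  (gr_module_fg nu Psi g1 <-> sg_module_fg (Fbar nu Psi) (Fset nu Psi g1)).
Proof.
move=> _ _ oG _ vnu _ cnu sPsi; split; [exact: dir1 | exact: dir2].
Qed.
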